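(* Let $q$ be a nonzero complex number with $q^4\ne1$. Let $\zeta,\kappa,\zeta',\kappa'$ be nonzero complex numbers with $\zeta\neq\pm1$, $\kappa^4\neq 1$, $\zeta'\ne\pm1$, $(\kappa')^4\neq1$. Let $x,y$ and $x',y'$ be the standard bases of $V(\zeta,\kappa)$ and $V(\zeta',\kappa')$. If \[\phi: V(\zeta,\kappa)\otimes V(\zeta',\kappa')\to V(\zeta',\kappa')\otimes V(\zeta,\kappa)\] is a module isomorphism, then there are constants $a_1,a_2,b_1,b_2,c_1,c_2$ with \[\phi(x\otimes x')=a_2\,x'\otimes x,\quad \phi(x\otimes y')=c_2\,x'\otimes y+b_2\,y'\otimes x,\] \[\phi(y\otimes x')=b_1\,x'\otimes y+c_1\,y'\otimes x,\quad \phi(y\otimes y')=a_1\,y'\otimes y. \tag{$*$}\] Furthermore, a linear map $\phi$ of the form $( * )$ is a module homomorphism if and only if \[ \begin{aligned} &[\zeta]c_2+[\zeta']\zeta^{-1}b_2=[\zeta']a_2, && [\zeta]b_1+\zeta^{-1}[\zeta']c_1=[\zeta](\zeta')^{-1}a_2,\\ &[\zeta']\zeta^{-1}a_1=(\zeta')^{-1}[\zeta]c_2-[\zeta']b_1, && -[\zeta]a_1=(\zeta')^{-1}[\zeta]b_2-[\zeta']c_1,\\ &a_2=c_1+\zeta b_2, && \zeta'a_2=b_1+\zeta c_2,\\ &c_2-\zeta'b_2=a_1, && b_1-c_1\zeta'=-a_1\zeta. \end{aligned} \]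
   Context: $[\zeta]=\frac{\zeta-\zeta^{-1}}{q-q^{-1}}$. $U_q(\mathfrak{gl}(1|1))$ is the associative superalgebra generated by odd $E,F$ and even invertible commuting $W^{\pm1},K^{\pm1}$ with relations $KEK^{-1}=q^2E$, $KFK^{-1}=q^{-2}F$, $W$ central, $EF+FE=\frac{W-W^{-1}}{q-q^{-1}}$, $E^2=F^2=0$. It is a Hopf superalgebra with comultiplication $\Delta(W)=W\otimes W$, $\Delta(K)=K\otimes K$, $\Delta(E)=E\otimes W^{-1}+1\otimes E$, $\Delta(F)=F\otimes 1+W\otimes F$; tensor products of modules are formed via $\Delta$ with the sign rule $(a\otimes b)(v\otimes w)=(-1)^{|b||v|}(av\otimes bw)$ for homogeneous elements. For $\zeta,\kappa\in\mathbb{C}^\times$, $V(\zeta,\kappa)$ is the module with basis $x$ (even), $y$ (odd) and action $Ex=0$, $Fx=y$, $Wx=\zeta x$, $Kx=\kappa x$, $Fy=0$, $Ey=[\zeta]x$, $Wy=\zeta y$, $Ky=q^{-2}\kappa y$; similarly $V(\zeta',\kappa')$ has basis $x',y'$. A module homomorphism is a linear map commuting with the action of all generators. *)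

(* Defs.v *)
(* Complex numbers are modelled as R[i] = complex R for an
   arbitrary R : realType (every realType is a model of the real numbers). *)
From HB Require Import structures.
From mathcomp Require Import all_boot all_order all_algebra.
From mathcomp Require Import complex.
From mathcomp Require Import reals.
Set Implicit Arguments.
Unset Strict Implicit.
Unset Printing Implicit Defensive.
Import Order.TTheory GRing.Theory Num.Theory.
Local Open Scope ring_scope.

Section Gl11.
Variable C : fieldType.

Definition qbr (q z : C) : C := (z - z^-1) / (q - q^-1).

(* A representation of U_q(gl(1|1)) on the super vector space C^n, given by
   the matrices (acting on column coordinate vectors) of the generators
   E, F, W, W^-1, K, K^-1, together with the parity of each basis vector. *)
Record gl11rep (n : nat) := Gl11Rep {
  rE : 'M[C]_n; rF : 'M[C]_n;
  rW : 'M[C]_n; rWi : 'M[C]_n;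
  rK : 'M[C]_n; rKi : 'M[C]_n;
  rpar : 'I_n -> bool (* true = odd *) }.

Definition sgnmx n (p : 'I_n -> bool) : 'M[C]_n :=
  diag_mx (\row_i (if p i then -1 else 1)).

(* Elements of V1 (x) V2 with dim V1 = m, dim V2 = n are represented by
   coefficient matrices M : 'M_(m,n), M i j = coefficient of e_i (x) f_j;
   in particular the pure tensor v (x) w is v *m w^T. *)
Definition tens m n (v : 'cV[C]_m) (w : 'cV[C]_n) : 'M[C]_(m, n) := v *m w^T.

(* action of a (x) b on V1 (x) V2 with the sign rule
   (a (x) b)(v (x) w) = (-1)^{|b||v|} av (x) bw, where b has parity oddb *)
Definition tens_op m n (p1 : 'I_m -> bool) (A : 'M[C]_m) (B : 'M[C]_n)
  (oddb : bool) (M : 'M[C]_(m, n)) : 'M[C]_(m, n) :=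
  A *m (if oddb then sgnmx p1 *m M else M) *m B^T.

Section Tensor.
Variables (m n : nat) (V1 : gl11rep m) (V2 : gl11rep n).
Let p1 := rpar V1.
(* Delta(E) = E (x) W^-1 + 1 (x) E   (E odd, W^-1 even) *)
Definition tE M := tens_op p1 (rE V1) (rWi V2) false M + tens_op p1 1 (rE V2) true M.
Definition tF M := tens_op p1 (rF V1) 1 false M + tens_op p1 (rW V1) (rF V2) true M.
Definition tW M := tens_op p1 (rW V1) (rW V2) false M.
Definition tWi M := tens_op p1 (rWi V1) (rWi V2) false M.
Definition tK M := tens_op p1 (rK V1) (rK V2) false M.
Definition tKi M := tens_op p1 (rKi V1) (rKi V2) false M.
End Tensor.

Definition tens_hom m n m' n' (V1 : gl11rep m) (V2 : gl11rep n)
  (V3 : gl11rep m') (V4 : gl11rep n') (f : 'M[C]_(m, n) -> 'M[C]_(m', n')) :=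
  forall M,
  f (tE V1 V2 M) = tE V3 V4 (f M) /\ f (tF V1 V2 M) = tF V3 V4 (f M) /\
  f (tW V1 V2 M) = tW V3 V4 (f M) /\ f (tWi V1 V2 M) = tWi V3 V4 (f M) /\
  f (tK V1 V2 M) = tK V3 V4 (f M) /\ f (tKi V1 V2 M) = tKi V3 V4 (f M).

(* standard basis: x = e_0 (even), y = e_1 (odd) *)
Definition bx : 'cV[C]_2 := delta_mx 0 0.
Definition by_ : 'cV[C]_2 := delta_mx 1 0.

(* the module V(zeta, kappa) in the basis (x, y):
   Ex = 0, Ey = [zeta] x, Fx = y, Fy = 0, W = zeta, K x = kappa x,
   K y = q^-2 kappa y *)
Definition Vmod (q zeta kappa : C) : gl11rep 2 :=
  @Gl11Rep 2
    (\matrix_(i < 2, j < 2) if (i == 0) && (j == 1) then qbr q zeta else 0)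
    (\matrix_(i < 2, j < 2) if (i == 1) && (j == 0) then 1 else 0)
    (zeta%:M) (zeta^-1%:M)
    (diag_mx (\row_(i < 2) if i == 0 then kappa else q ^- 2 * kappa))
    (diag_mx (\row_(i < 2) if i == 0 then kappa^-1 else q ^+ 2 * kappa^-1))
    (fun i => i == 1).

End Gl11.

(* Main.v *)
Require Import Defs.
From HB Require Import structures.
From mathcomp Require Import all_boot all_order all_algebra.
From mathcomp Require Import complex.
From mathcomp Require Import reals.
From mathcomp Require Import ring.
Import Order.TTheory GRing.Theory Num.Theory.
Local Open Scope ring_scope.

Lemma l1 : lift ord0 ord0 = 1 :> 'I_2. Proof. exact: val_inj. Qed.
Lemma l0 : ord0 = 0 :> 'I_2. Proof. exact: val_inj. Qed.
Lemma ord2 (i : 'I_2) : i = 0 \/ i = 1.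
Proof. case: i => [[|[|//]] ?]; [left|right]; exact: val_inj. Qed.

Ltac mxx := apply/matrixP; let i := fresh "i" in let j := fresh "j" in intros i j; case: (ord2 i) => ->; case: (ord2 j) => ->; rewrite !(mxE, big_ord_recl, big_ord0) /= ?l1 ?l0.


Section Ops.
Variable (F : fieldType) (q z k z' k' : F).
Definition kw (k : F) (i : 'I_2) := if i == 0 then k else q ^- 2 * k.
Definition kwi (k : F) (i : 'I_2) := if i == 0 then k^-1 else q ^+ 2 * k^-1.

Lemma tE_V (M : 'M[F]_2) : tE (Vmod q z k) (Vmod q z' k') M =
  \matrix_(i<2,j<2) (if i == 0 then if j == 0 then qbr q z' * M 0 1 + z'^-1 * qbr q z * M 1 0
   else z'^-1 * qbr q z * M 1 1 else if j == 0 then - qbr q z' * M 1 1 else 0).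
Proof. rewrite /tE /tens_op /sgnmx /=; mxx; ring. Qed.

Lemma tF_V (M : 'M[F]_2) : tF (Vmod q z k) (Vmod q z' k') M =
  \matrix_(i<2,j<2) (if i == 0 then if j == 0 then 0 else z * M 0 0
   else if j == 0 then M 0 0 else M 0 1 - z * M 1 0).
Proof. rewrite /tF /tens_op /sgnmx /=; mxx; ring. Qed.

Lemma tW_V (M : 'M[F]_2) : tW (Vmod q z k) (Vmod q z' k') M = (z * z') *: M.
Proof. rewrite /tW /tens_op /sgnmx /=; mxx; ring. Qed.

Lemma tWi_V (M : 'M[F]_2) : tWi (Vmod q z k) (Vmod q z' k') M = (z^-1 * z'^-1) *: M.
Proof. rewrite /tWi /tens_op /sgnmx /=; mxx; ring. Qed.

Lemma tK_V (M : 'M[F]_2) : tK (Vmod q z k) (Vmod q z' k') M =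
  \matrix_(i<2,j<2) (kw k i * kw k' j * M i j).
Proof. rewrite /tK /tens_op /sgnmx /kw /=; mxx; ring. Qed.

Lemma tKi_V (M : 'M[F]_2) : tKi (Vmod q z k) (Vmod q z' k') M =
  \matrix_(i<2,j<2) (kwi k i * kwi k' j * M i j).
Proof. rewrite /tKi /tens_op /sgnmx /kwi /=; mxx; ring. Qed.
End Ops.

Section T.
Variable (F : fieldType) (q z k z' k' : F).
Let x := bx F.
Let y := by_ F.
Let V := Vmod q z k.
Let V' := Vmod q z' k'.

Lemma decomp (M : 'M[F]_2) : M = M 0 0 *: tens x x + M 0 1 *: tens x y + M 1 0 *: tens y x + M 1 1 *: tens y y.
Proof. rewrite /tens /x /y /bx /by_. mxx; ring. Qed.

Lemma phiE a1 a2 b1 b2 c1 c2 (phi : {linear 'M[F]_2 -> 'M[F]_2}) :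
     phi (tens x x) = a2 *: tens x x ->
     phi (tens x y) = c2 *: tens x y + b2 *: tens y x ->
     phi (tens y x) = b1 *: tens x y + c1 *: tens y x ->
     phi (tens y y) = a1 *: tens y y -> forall M,
  phi M = \matrix_(i < 2, j < 2) (if i == 0 then if j == 0 then a2 * M 0 0 else c2 * M 0 1 + b1 * M 1 0
     else if j == 0 then b2 * M 0 1 + c1 * M 1 0 else a1 * M 1 1).
Proof.
move=> h1 h2 h3 h4 M; rewrite {1}(decomp M) !linearD !linearZ /= h1 h2 h3 h4.
rewrite /tens /x /y /bx /by_. mxx.
all: ring.
Qed.

Lemma lc1 {l r : F} (h : l = r) (c L R : F) : L - R = c * (l - r) -> L = R.
Proof. by rewrite h subrr mulr0 => /eqP; rewrite subr_eq0 => /eqP. Qed.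

Lemma lc2 {l r l' r' : F} (h : l = r) (h' : l' = r') (c c' L R : F) :
  L - R = c * (l - r) + c' * (l' - r') -> L = R.
Proof. by rewrite h h' !subrr !mulr0 addr0 => /eqP; rewrite subr_eq0 => /eqP. Qed.

Lemma zero_of {n c d : F} (e : F) : e != 0 -> c - d = e -> c * n = d * n -> n = 0.
Proof.
move=> he hcd h; have : (c - d) * n = 0 by rewrite mulrBl h subrr.
by rewrite hcd => /eqP; rewrite mulf_eq0 (negbTE he) /= => /eqP.
Qed.

Lemma wt_entries {N : 'M[F]_2} {c : F} : c *: N = tK V' V N ->
  [/\ c * N 0 1 = k' * (q^-2 * k) * N 0 1, c * N 1 0 = q^-2*k' * k * N 1 0,
      c * N 0 0 = k' * k * N 0 0 & c * N 1 1 = q^-2*k' * (q^-2*k) * N 1 1].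
Proof.
move/matrixP => h; split;
[have := h 0 1|have := h 1 0|have := h 0 0|have := h 1 1];
rewrite !(mxE, big_ord_recl, big_ord0) /= ?l1 ?l0 => e; apply: (lc1 e 1); ring.
Qed.

Ltac nz e := rewrite (_ : _ - _ = e); [rewrite ?mulNr ?oppr_eq0 ?mulf_neq0 // | ring].

Lemma part1 (hq : q != 0) (hq4 : q^+4 != 1) (hk : k != 0) (hk' : k' != 0)
  (phi : {linear 'M[F]_2 -> 'M[F]_2})
  (hK : forall M, phi (tK V V' M) = tK V' V (phi M)) :
     exists a1 a2 b1 b2 c1 c2 : F,
       [/\ phi (tens x x) = a2 *: tens x x,
           phi (tens x y) = c2 *: tens x y + b2 *: tens y x,
           phi (tens y x) = b1 *: tens x y + c1 *: tens y x &
           phi (tens y y) = a1 *: tens y y].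
Proof.
have hp0 : (q ^- 2) != 0 by rewrite invr_eq0 expf_eq0.
have hq2 : q ^+ 2 != 1.
  apply: contraNneq hq4 => h; by rewrite (_ : 4 = 2 * 2)%N // exprM h expr1n.
have hp1 : 1 - (q ^- 2) != 0 by rewrite subr_eq0 eq_sym invr_eq1.
have hp2 : 1 - (q ^- 2) ^+ 2 != 0.
  by rewrite subr_eq0 eq_sym exprVn -exprM invr_eq1.
have hkk : k * k' != 0 by rewrite mulf_neq0.
have wt : forall M c, tK V V' M = c *: M -> c *: phi M = tK V' V (phi M).
  by move=> M c hM; rewrite -linearZ -hM hK.
have [xx1 xx2 _ xx4] := wt_entries (wt (tens x x) (k * k') ltac:(rewrite /tens /x /y /bx /by_; mxx; ring)).
have [xy1 _ xy3 xy4] := wt_entries (wt (tens x y) (k * ((q ^- 2) * k')) ltac:(rewrite /tens /x /y /bx /by_; mxx; ring)).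
have [_ yx2 yx3 yx4] := wt_entries (wt (tens y x) ((q ^- 2) * k * k') ltac:(rewrite /tens /x /y /bx /by_; mxx; ring)).
have [yy1 yy2 yy3 _] := wt_entries (wt (tens y y) ((q ^- 2) * k * ((q ^- 2) * k')) ltac:(rewrite /tens /x /y /bx /by_; mxx; ring)).
move: (phi (tens x x)) (phi (tens x y)) (phi (tens y x)) (phi (tens y y)) xx1 xx2 xx4 xy1 xy3 xy4 yx2 yx3 yx4 yy1 yy2 yy3
  => Nxx Nxy Nyx Nyy xx1 xx2 xx4 xy1 xy3 xy4 yx2 yx3 yx4 yy1 yy2 yy3.
have {xx1}xx1 : Nxx 0 1 = 0 by apply: (zero_of (k * k' * (1 - (q ^- 2))) _ _ xx1); [rewrite ?mulNr ?oppr_eq0 ?mulf_neq0 | ring].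
have {xx2}xx2 : Nxx 1 0 = 0 by apply: (zero_of (k * k' * (1 - (q ^- 2))) _ _ xx2); [rewrite ?mulNr ?oppr_eq0 ?mulf_neq0 | ring].
have {xx4}xx4 : Nxx 1 1 = 0 by apply: (zero_of (k * k' * (1 - (q ^- 2) ^+ 2)) _ _ xx4); [rewrite ?mulNr ?oppr_eq0 ?mulf_neq0 | ring].
have {xy3}xy3 : Nxy 0 0 = 0 by apply: (zero_of (- (k * k' * (1 - (q ^- 2)))) _ _ xy3); [rewrite ?mulNr ?oppr_eq0 ?mulf_neq0 | ring].
have {xy4}xy4 : Nxy 1 1 = 0 by apply: (zero_of ((q ^- 2) * (k * k') * (1 - (q ^- 2))) _ _ xy4); [rewrite ?mulNr ?oppr_eq0 ?mulf_neq0 | ring].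
have {yx3}yx3 : Nyx 0 0 = 0 by apply: (zero_of (- (k * k' * (1 - (q ^- 2)))) _ _ yx3); [rewrite ?mulNr ?oppr_eq0 ?mulf_neq0 | ring].
have {yx4}yx4 : Nyx 1 1 = 0 by apply: (zero_of ((q ^- 2) * (k * k') * (1 - (q ^- 2))) _ _ yx4); [rewrite ?mulNr ?oppr_eq0 ?mulf_neq0 | ring].
have {yy1}yy1 : Nyy 0 1 = 0 by apply: (zero_of (- ((q ^- 2) * (k * k') * (1 - (q ^- 2)))) _ _ yy1); [rewrite ?mulNr ?oppr_eq0 ?mulf_neq0 | ring].
have {yy2}yy2 : Nyy 1 0 = 0 by apply: (zero_of (- ((q ^- 2) * (k * k') * (1 - (q ^- 2)))) _ _ yy2); [rewrite ?mulNr ?oppr_eq0 ?mulf_neq0 | ring].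
have {yy3}yy3 : Nyy 0 0 = 0 by apply: (zero_of (- (k * k' * (1 - (q ^- 2) ^+ 2))) _ _ yy3); [rewrite ?mulNr ?oppr_eq0 ?mulf_neq0 | ring].
exists (Nyy 1 1), (Nxx 0 0), (Nyx 0 1), (Nxy 1 0), (Nyx 1 0), (Nxy 0 1).
rewrite /tens /x /y /bx /by_; split; mxx;
  rewrite ?xx1 ?xx2 ?xx4 ?xy3 ?xy4 ?yx3 ?yx4 ?yy1 ?yy2 ?yy3; ring.
Qed.

Ltac tryc1 e c := first [apply: (lc1 e c); ring | apply: (lc1 e (- c)); ring].
Ltac tryc2 e e' c c' := first [apply: (lc2 e e' c c'); ring | apply: (lc2 e e' (- c) (- c')); ring
  | apply: (lc2 e e' (- c) c'); ring | apply: (lc2 e e' c (- c')); ring].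

Lemma part2 (a1 a2 b1 b2 c1 c2 : F) (phi : {linear 'M[F]_2 -> 'M[F]_2}) :
     phi (tens x x) = a2 *: tens x x ->
     phi (tens x y) = c2 *: tens x y + b2 *: tens y x ->
     phi (tens y x) = b1 *: tens x y + c1 *: tens y x ->
     phi (tens y y) = a1 *: tens y y ->
     (tens_hom V V' V' V phi <->
      (qbr q z * c2 + qbr q z' * z^-1 * b2 = qbr q z' * a2 /\
       qbr q z * b1 + z^-1 * qbr q z' * c1 = qbr q z * z'^-1 * a2 /\
       qbr q z' * z^-1 * a1 = z'^-1 * qbr q z * c2 - qbr q z' * b1 /\
       - (qbr q z * a1) = z'^-1 * qbr q z * b2 - qbr q z' * c1 /\
       a2 = c1 + z * b2 /\
       z' * a2 = b1 + z * c2 /\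
       c2 - z' * b2 = a1 /\
       b1 - c1 * z' = - (a1 * z))).
Proof.
move=> h1 h2 h3 h4; have pE := @phiE _ _ _ _ _ _ _ h1 h2 h3 h4.
split.
  move=> hom.
  have hE := fun M => (hom M).1.
  have hF := fun M => (hom M).2.1.
  have gE : forall M i j, (phi (tE V V' M)) i j = (tE V' V (phi M)) i j by move=> M i j; rewrite hE.
  have gF : forall M i j, (phi (tF V V' M)) i j = (tF V' V (phi M)) i j by move=> M i j; rewrite hF.
  have E1 := gE (tens x y) 0 0. have E2 := gE (tens y x) 0 0.
  have E3 := gE (tens y y) 0 1. have E4 := gE (tens y y) 1 0.
  have E5 := gF (tens x x) 1 0. have E6 := gF (tens x x) 0 1.
  have E7 := gF (tens x y) 1 1. have E8 := gF (tens y x) 1 1.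
  move: E1 E2 E3 E4 E5 E6 E7 E8; rewrite !pE /V /V' !(tE_V, tF_V) /tens /x /y /bx /by_.
  rewrite !(mxE, big_ord_recl, big_ord0) /= ?l1 ?l0 => E1 E2 E3 E4 E5 E6 E7 E8.
  split; [tryc1 E1 (1:F)|split; [tryc1 E2 (1:F)|split; [tryc1 E3 (1:F)|split; [tryc1 E4 (1:F)|
  split; [tryc1 E5 (1:F)|split; [tryc1 E6 (1:F)|split; [tryc1 E7 (1:F)|tryc1 E8 (1:F)]]]]]]].
move=> [e1 [e2 [e3 [e4 [e5 [e6 [e7 e8]]]]]]] M.
rewrite !pE /V /V' !(tE_V, tF_V, tW_V, tWi_V, tK_V, tKi_V) /kw /kwi.
split; [|split; [|split; [|split; [|split]]]]; mxx.
all: first [ring | tryc2 e1 e2 (M 0 1) (M 1 0) | tryc1 e3 (M 1 1) | tryc1 e4 (M 1 1)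
  | tryc1 e6 (M 0 0) | tryc1 e5 (M 0 0) | tryc2 e7 e8 (M 0 1) (M 1 0)].
Qed.
End T.

Local Open Scope complex_scope.

Theorem proposition4p2 (R : realType) (q zeta kappa zeta' kappa' : R[i]) :
  q != 0 -> q ^+ 4 != 1 ->
  zeta != 0 -> kappa != 0 -> zeta' != 0 -> kappa' != 0 ->
  zeta != 1 -> zeta != -1 -> kappa ^+ 4 != 1 ->
  zeta' != 1 -> zeta' != -1 -> kappa' ^+ 4 != 1 ->
  let V := Vmod q zeta kappa in
  let V' := Vmod q zeta' kappa' in
  let x := bx R[i] in let y := by_ R[i] in
  (* part 1: isomorphisms have the form ( * ) *)
  (forall phi : {linear 'M[R[i]]_(2, 2) -> 'M[R[i]]_(2, 2)},
     tens_hom V V' V' V phi -> bijective phi ->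
     exists a1 a2 b1 b2 c1 c2 : R[i],
       [/\ phi (tens x x) = a2 *: tens x x,
           phi (tens x y) = c2 *: tens x y + b2 *: tens y x,
           phi (tens y x) = b1 *: tens x y + c1 *: tens y x &
           phi (tens y y) = a1 *: tens y y]) /\
  (* part 2: characterisation of homomorphisms of the form ( * ) *)
  (forall (a1 a2 b1 b2 c1 c2 : R[i])
          (phi : {linear 'M[R[i]]_(2, 2) -> 'M[R[i]]_(2, 2)}),
     phi (tens x x) = a2 *: tens x x ->
     phi (tens x y) = c2 *: tens x y + b2 *: tens y x ->
     phi (tens y x) = b1 *: tens x y + c1 *: tens y x ->
     phi (tens y y) = a1 *: tens y y ->
     (tens_hom V V' V' V phi <->
      (qbr q zeta * c2 + qbr q zeta' * zeta^-1 * b2 = qbr q zeta' * a2 /\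
       qbr q zeta * b1 + zeta^-1 * qbr q zeta' * c1 = qbr q zeta * zeta'^-1 * a2 /\
       qbr q zeta' * zeta^-1 * a1 = zeta'^-1 * qbr q zeta * c2 - qbr q zeta' * b1 /\
       - (qbr q zeta * a1) = zeta'^-1 * qbr q zeta * b2 - qbr q zeta' * c1 /\
       a2 = c1 + zeta * b2 /\
       zeta' * a2 = b1 + zeta * c2 /\
       c2 - zeta' * b2 = a1 /\
       b1 - c1 * zeta' = - (a1 * zeta)))).
Proof.
move=> hq hq4 hz hk hz' hk' _ _ hk4 _ _ hk'4 V V' x y.
split.
  move=> phi hom _.
  apply: (@part1 _ q zeta kappa zeta' kappa' hq hq4 hk hk') => M.
  exact: (hom M).2.2.2.2.1.
move=> a1 a2 b1 b2 c1 c2 phi h1 h2 h3 h4.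
exact: (@part2 _ q zeta kappa zeta' kappa' a1 a2 b1 b2 c1 c2 phi h1 h2 h3 h4).
Qed.
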